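(* Let $X,Y\in\Sigma^*$, $k\ge0$ and $\ell\ge1$ integers, $\mathcal{S}(\ell)$ an $\ell$-cover, $\mathcal{F}$ the set of all strings occurring as a component of a pair in $\mathsf{Pairs}_\ell(X)\cup\mathsf{Pairs}_\ell(Y)$, and $(N(F))_{F\in\mathcal{F}}$ a $k$-complete family. For $S\in\{X,Y\}$ and a half-integer $0\le k'\le k$ define $$\mathsf{Pairs}^{(k,k')}_\ell(S)=\bigcup_{(U_1,U_2)\in\mathsf{Pairs}_\ell(S)}\{(U_1',U_2'): U_i'\in N_{d_i,d_i'}(U_i),\ d_1+d_2=k,\ d_1'+d_2'=k'\},$$ where $d_1,d_2$ range over nonnegative integers and $d_i'$ over half-integers with $0\le d_i'\le d_i$. If $\mathsf{LCF}_k(X,Y)\ge\ell$, then $$\mathsf{LCF}_k(X,Y)=\max_{k_1+k_2=k}\mathrm{maxPairLCP}(\mathsf{Pairs}^{(k,k_1)}_\ell(X),\mathsf{Pairs}^{(k,k_2)}_\ell(Y)),$$ where $k_1,k_2$ range over half-integers in $[0,k]$.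
   Context: $U[i..j]$ is a factor, $U^R$ the reversal, $d_H$ the Hamming distance, $\mathsf{LCP}$ the longest common prefix length, $\mathsf{LCP}_d(U,V)=\max\{p\le\min(|U|,|V|): d_H(U[1..p],V[1..p])\le d\}$, $\#_\$(W)$ the number of $\$$'s in $W$, and half-integers are elements of $\tfrac12\mathbb{Z}$. $\mathsf{LCF}_k(X,Y)$ is the maximum length of a factor of $X$ and a factor of $Y$ of equal length at Hamming distance at most $k$. A $d$-cover is a set $\mathcal{S}(d)\subseteq\mathbb{Z}_+$ with a function $h$, $0\le h(i,j)<d$, such that $i+h(i,j),j+h(i,j)\in\mathcal{S}(d)$ for all $i,j\in\mathbb{Z}_+$; $\mathsf{Pairs}_\ell(U)=\{((U[1..i-1])^R,U[i..|U|]): i\in\mathcal{S}(\ell)\cap[1..|U|]\}$. $\mathrm{maxPairLCP}(\mathcal{P},\mathcal{Q})=\max\{\mathsf{LCP}(P_1,Q_1)+\mathsf{LCP}(P_2,Q_2):(P_1,P_2)\in\mathcal{P},(Q_1,Q_2)\in\mathcal{Q}\}$. With $\$\notin\Sigma$, $\Sigma_\$=\Sigma\cup\{\$\}$: $U',V'\in\Sigma_\$^*$ form a $(U,V)_d$-pair if $|U'|=|U|$, $|V'|=|V|$, and for each $i$: if $i>\mathsf{LCP}_d(U,V)$ or $U[i]=V[i]$ then $U'[i]=U[i]$, $V'[i]=V[i]$; otherwise $U'[i]=V'[i]\in\{U[i],V[i],\$\}$. Sets $N(F)\subseteq\Sigma_\$^*$ form a $k$-complete family if for all $U,V\in\mathcal{F}$,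 $0\le d\le k$, some $(U,V)_d$-pair $(U',V')$ has $U'\in N(U)$, $V'\in N(V)$. $N_d(F)=\{F'\in N(F):|F'|=|F|,\ d_H(F,F')\le d\}$ and $N_{d,d'}(F)=\{F'\in N_d(F): d_H(F,F')-\tfrac12\#_\$(F')\le d'\}$. *)

(* Defs.v *)
(* Strings over Sigma are [seq T] for an eqType T;
   Sigma_$ is [option T], with [None] playing the role of $.
   Positions are 1-indexed in the paper; here [nth] is 0-indexed:
   paper position i corresponds to index i-1.
   Half-integers x are represented by the nat h = 2x. *)
From HB Require Import structures.
From mathcomp Require Import all_boot.
Set Implicit Arguments. Unset Strict Implicit. Unset Printing Implicit Defensive.

Section Defs.
Variable T : eqType.

Definition hamming (A : eqType) (s t : seq A) : nat :=
  count (fun xy : A * A => xy.1 != xy.2) (zip s t).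

Definition lcp (A : eqType) (s t : seq A) : nat :=
  \max_(p < (minn (size s) (size t)).+1 | take p s == take p t) p.

Definition lcpd (d : nat) (U V : seq T) : nat :=
  \max_(p < (minn (size U) (size V)).+1 | hamming (take p U) (take p V) <= d) p.

Definition LCF (k : nat) (X Y : seq T) : nat :=
  \max_(len < (minn (size X) (size Y)).+1 |
        [exists i : 'I_(size X).+1, exists j : 'I_(size Y).+1,
           [&& i + len <= size X, j + len <= size Y &
               hamming (take len (drop i X)) (take len (drop j Y)) <= k]]) len.

Definition ndollar (W : seq (option T)) : nat := count (pred1 None) W.

Definition is_cover (d : nat) (S : nat -> Prop) (h : nat -> nat -> nat) : Prop :=
  (forall i, S i -> 0 < i) /\
  (forall i j, 0 < i -> 0 < j -> h i j < d /\ S (i + h i j) /\ S (j + h i j)).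

Definition Pairs (S : nat -> Prop) (U : seq T) (p : seq T * seq T) : Prop :=
  exists i, [/\ S i, 1 <= i <= size U & p = (rev (take i.-1 U), drop i.-1 U)].

Definition is_dpair (d : nat) (U V : seq T) (U' V' : seq (option T)) : Prop :=
  size U' = size U /\ size V' = size V /\
  forall i : nat,
    let u := nth None (map Some U) i in
    let v := nth None (map Some V) i in
    let u' := nth None U' i in
    let v' := nth None V' i in
    if (lcpd d U V <= i) || (u == v) then u' = u /\ v' = v
    else u' = v' /\ u' \in [:: u; v; None].

Definition k_complete (k : nat) (Fam : seq T -> Prop)
    (N : seq T -> seq (option T) -> Prop) : Prop :=
  forall U V, Fam U -> Fam V -> forall d, d <= k ->
    exists U' V', is_dpair d U V U' V' /\ N U U' /\ N V V'.

(* N_{d,d'}(F), with d' = h/2 given by the nat h *)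
Definition Ndd (N : seq T -> seq (option T) -> Prop) (d h : nat) (F : seq T)
    (F' : seq (option T)) : Prop :=
  [/\ N F F', size F' = size F, hamming (map Some F) F' <= d &
      (hamming (map Some F) F').*2 <= h + ndollar F'].

(* Pairs^{(k,k')}_l(S), with k' = h/2 *)
Definition PairsKK (S : nat -> Prop) (N : seq T -> seq (option T) -> Prop)
    (k h : nat) (W : seq T) (p : seq (option T) * seq (option T)) : Prop :=
  exists U1 U2 d1 d2 h1 h2,
    [/\ Pairs S W (U1, U2), d1 + d2 = k, h1 + h2 = h,
        h1 <= d1.*2 /\ h2 <= d2.*2 &
        Ndd N d1 h1 U1 p.1 /\ Ndd N d2 h2 U2 p.2].

Definition pairLCPvals (PP QQ : seq (option T) * seq (option T) -> Prop) (m : nat) : Prop :=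
  exists P Q, [/\ PP P, QQ Q & m = lcp P.1 Q.1 + lcp P.2 Q.2].

End Defs.

Definition is_max (A : nat -> Prop) (m : nat) : Prop :=
  A m /\ forall n, A n -> n <= m.

(* Main.v *)
Require Import Defs.
From mathcomp Require Import all_boot zify.
Set Implicit Arguments. Unset Strict Implicit. Unset Printing Implicit Defensive.

Lemma maxw (I : finType) i0 (P : pred I) (F : I -> nat) :
  P i0 -> exists2 i, P i & \max_(i | P i) F i = F i.
Proof.
move=> Pi0; rewrite (bigmax_eq_arg i0) //.
by case: arg_maxnP => // i Pi _; exists i.
Qed.
Section L.
Variable T : eqType.
Lemma ham_cat (A : eqType) (s1 s2 t1 t2 : seq A) : size s1 = size t1 ->
  hamming (s1 ++ s2) (t1 ++ t2) = hamming s1 t1 + hamming s2 t2.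
Proof. by move=> h; rewrite /hamming zip_cat // count_cat. Qed.

Lemma ham_rev (A : eqType) (s t : seq A) : size s = size t ->
  hamming (rev s) (rev t) = hamming s t.
Proof. by move=> h; rewrite /hamming -rev_zip // count_rev. Qed.

Lemma split_ham (X Y : seq T) a s t b : a <= s -> s <= size X -> a <= t -> t <= size Y ->
 hamming (take (a+b) (drop (s-a) X)) (take (a+b) (drop (t-a) Y)) =
 hamming (take a (rev (take s X))) (take a (rev (take t Y))) +
 hamming (take b (drop s X)) (take b (drop t Y)).
Proof.
move=> hs sX ht tY.
rewrite !takeD !drop_drop (subnKC hs) (subnKC ht) ham_cat; last first.
  rewrite !size_take !size_drop; by do 2 case: ifP; lia.
congr (_ + _).
rewrite !take_rev !size_takel // -ham_rev; last first.
  rewrite !size_take !size_drop; by do 2 case: ifP; lia.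
by rewrite !take_drop !(subnKC hs) !(subnKC ht).
Qed.

Lemma LCF_ge k (X Y : seq T) len i j : i + len <= size X -> j + len <= size Y ->
  hamming (take len (drop i X)) (take len (drop j Y)) <= k -> len <= LCF k X Y.
Proof.
move=> hX hY hk.
have hl : len < (minn (size X) (size Y)).+1 by lia.
have hi : i < (size X).+1 by lia.
have hj : j < (size Y).+1 by lia.
apply: (leq_trans _ (leq_bigmax_cond (Ordinal hl) _)) => //=.
by apply/existsP; exists (Ordinal hi); apply/existsP; exists (Ordinal hj); rewrite /= hX hY hk.
Qed.

Lemma LCF_wit k (X Y : seq T) : exists len i j, [/\ LCF k X Y = len, i + len <= size X,
  j + len <= size Y & hamming (take len (drop i X)) (take len (drop j Y)) <= k].
Proof.
rewrite /LCF.
case: (@maxw _ (ord0 : 'I_(minn (size X) (size Y)).+1) (fun len : 'I__ =>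
        [exists i : 'I_(size X).+1, exists j : 'I_(size Y).+1,
           [&& i + len <= size X, j + len <= size Y &
               hamming (take len (drop i X)) (take len (drop j Y)) <= k]]) (fun p => nat_of_ord p)) => [|len].
  apply/existsP; exists ord0; apply/existsP; exists ord0; by rewrite /= !take0.
move=> /existsP[i /existsP[j /and3P[h1 h2 h3]]] ->.
by exists len, i, j.
Qed.
Lemma nd_le_ham (F : seq T) F' : size F' = size F -> ndollar F' <= hamming (map Some F) F'.
Proof.
elim: F F' => [|x F IH] [|y F'] //= [] /IH; rewrite /ndollar /hamming /=.
by case: y => [y|] /=; lia.
Qed.

Lemma ham_cons (A : eqType) (x y : A) s t : hamming (x :: s) (y :: t) = (x != y) + hamming s t.
Proof. by []. Qed.
Lemma nd_cons (x : option T) s : ndollar (x :: s) = (x == None) + ndollar s.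
Proof. by []. Qed.

Lemma some_neq (x y : T) : (Some x != Some y) = (x != y).
Proof. by []. Qed.

Lemma some_eq (x y : T) : (Some x == Some y) = (x == y).
Proof. by []. Qed.

Lemma cost_up (U V : seq T) U' V' p : size U' = size U -> size V' = size V ->
  p <= size U -> p <= size V -> take p U' = take p V' ->
  (hamming (take p U) (take p V)).*2 + ndollar U' + ndollar V' <=
  (hamming (map Some U) U').*2 + (hamming (map Some V) V').*2.
Proof.
elim: p U V U' V' => [|p IH] U V U' V' sU sV pU pV tk.
  have -> : hamming (take 0 U) (take 0 V) = 0 by rewrite !take0.
  have := nd_le_ham sU; have := nd_le_ham sV; lia.
case: U U' V V' sU sV pU pV tk => [|u U] [|u' U'] // [|v V] [|v' V'] //= [sU] [sV] pU pV [e tk].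
have := IH _ _ _ _ sU sV pU pV tk.
rewrite !ham_cons -e; case: u' {e} => [w|] /=; rewrite ?some_neq;
  case: (u =P v) => [?|/eqP nuv]; subst; rewrite ?eqxx ?(negbTE nuv) /=; try lia;
  case: (u =P w) => [?|/eqP nuw]; subst; rewrite ?eqxx ?(negbTE nuw) /=; try lia;
  case: (v =P w) => [?|/eqP nvw]; subst; rewrite ?eqxx ?(negbTE nvw) /=; try lia;
  by move: nuv; rewrite eqxx.
Qed.

Lemma ham_refl (A : eqType) (s : seq A) : hamming s s = 0.
Proof. by elim: s => //= x s; rewrite /hamming /= eqxx. Qed.

Lemma nd_map (s : seq T) : ndollar (map Some s) = 0.
Proof. by elim: s. Qed.

Lemma dpair_gen m (U V : seq T) U' V' : size U' = size U -> size V' = size V ->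
  m <= size U -> m <= size V ->
  (forall i : nat,
    let u := nth None (map Some U) i in
    let v := nth None (map Some V) i in
    let u' := nth None U' i in
    let v' := nth None V' i in
    if (m <= i) || (u == v) then u' = u /\ v' = v
    else u' = v' /\ u' \in [:: u; v; None]) ->
  [/\ take m U' = take m V',
      (hamming (map Some U) U').*2 + (hamming (map Some V) V').*2 <=
        (hamming (take m U) (take m V)).*2 + ndollar U' + ndollar V',
      hamming (map Some U) U' <= hamming (take m U) (take m V) &
      hamming (map Some V) V' <= hamming (take m U) (take m V)].
Proof.
elim: m U V U' V' => [|m IH] U V U' V' sU sV pU pV H.
  have eU : U' = map Some U.
    apply: (@eq_from_nth _ None); first by rewrite size_map.
    by move=> i _; have [] := H i.
  have eV : V' = map Some V.
    apply: (@eq_from_nth _ None); first by rewrite size_map.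
    by move=> i _; have [] := H i.
  by subst; rewrite !take0 !ham_refl.
case: U U' V V' sU sV pU pV H => [|u U] [|u' U'] // [|v V] [|v' V'] //= [sU] [sV] pU pV H.
have [tk c1 c2 c3] := IH _ _ _ _ sU sV pU pV (fun i => H i.+1).
have := H 0; rewrite /= {H}.
move: c1 c2 c3; rewrite !ham_cons tk some_eq.
case: (u =P v) => [<-|/eqP nuv].
  by move=> c1 c2 c3 [-> ->]; rewrite !eqxx /=; split => //; lia.
move=> c1 c2 c3 [<-]; rewrite !inE => /or3P[/eqP->|/eqP->|/eqP->];
  rewrite ?some_neq ?eqxx ?nuv ?(eq_sym v) ?nuv /=; split => //; lia.
Qed.
Lemma lcp_le (A : eqType) (s t : seq A) : lcp s t <= minn (size s) (size t).
Proof. apply/bigmax_leqP => i _; exact: (ltn_ord i). Qed.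

Lemma lcp_take (A : eqType) (s t : seq A) : take (lcp s t) s = take (lcp s t) t.
Proof.
rewrite /lcp; case: (@maxw _ (ord0 : 'I_(minn (size s) (size t)).+1)
  (fun p : 'I__ => take p s == take p t) (fun p => nat_of_ord p)) => [|i Pi ->].
  by rewrite /= !take0.
exact/eqP.
Qed.

Lemma lcp_ge (A : eqType) (s t : seq A) p : p <= minn (size s) (size t) ->
  take p s = take p t -> p <= lcp s t.
Proof.
move=> hp he; rewrite /lcp.
have hp' : p < (minn (size s) (size t)).+1 by [].
apply: (leq_trans _ (leq_bigmax_cond (Ordinal hp') _)) => //=.
by rewrite he.
Qed.

Lemma lcpd_le d (s t : seq T) : lcpd d s t <= minn (size s) (size t).
Proof. apply/bigmax_leqP => i _; exact: (ltn_ord i). Qed.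

Lemma lcpd_ham d (s t : seq T) :
  hamming (take (lcpd d s t) s) (take (lcpd d s t) t) <= d.
Proof.
rewrite /lcpd; case: (@maxw _ (ord0 : 'I_(minn (size s) (size t)).+1)
  (fun p : 'I__ => hamming (take p s) (take p t) <= d) (fun p => nat_of_ord p)) => [|i Pi ->].
  by rewrite /= !take0.
exact: Pi.
Qed.

Lemma lcpd_ge d (s t : seq T) p : p <= minn (size s) (size t) ->
  hamming (take p s) (take p t) <= d -> p <= lcpd d s t.
Proof.
move=> hp he; rewrite /lcpd.
have hp' : p < (minn (size s) (size t)).+1 by [].
by apply: (leq_trans _ (leq_bigmax_cond (Ordinal hp') _)).
Qed.

Lemma upper k (S : nat -> Prop) N (X Y : seq T) k1 k2 m : k1 + k2 = k.*2 ->
  pairLCPvals (PairsKK S N k k1 X) (PairsKK S N k k2 Y) m -> m <= LCF k X Y.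
Proof.
move=> hk [[P1 P2] [[Q1 Q2] [hP hQ ->]]] /=.
case: hP => U1 [U2 [d1 [d2 [h1 [h2 [[i [Si /andP[i1 iX] [e1 e2]]] _ eh [h1d h2d] [NP1 NP2]]]]]]].
case: hQ => V1 [V2 [e1' [e2' [g1 [g2 [[j [Sj /andP[j1 jY] [f1 f2]]] _ eg [g1d g2d] [NQ1 NQ2]]]]]]].
case: NP1 => /= _ sP1 _ cP1; case: NP2 => /= _ sP2 _ cP2.
case: NQ1 => /= _ sQ1 _ cQ1; case: NQ2 => /= _ sQ2 _ cQ2.
set s := i.-1 in e1 e2; set t := j.-1 in f1 f2.
have ss : s <= size X by rewrite /s; lia.
have tt : t <= size Y by rewrite /t; lia.
have ha := lcp_le P1 Q1; have hb := lcp_le P2 Q2.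
have tka := lcp_take P1 Q1; have tkb := lcp_take P2 Q2.
have cu1 := cost_up sP1 sQ1 _ _ tka.
have cu2 := cost_up sP2 sQ2 _ _ tkb.
subst U1 U2 V1 V2.
move: ha hb cu1 cu2 tka tkb.
rewrite sP1 sQ1 sP2 sQ2 !size_rev !size_takel // !size_drop.
set a := lcp P1 Q1; set b := lcp P2 Q2.
move=> ha hb cu1 cu2 _ _.
have {cu1} cu1 := cu1 ltac:(lia) ltac:(lia).
have {cu2} cu2 := cu2 ltac:(lia) ltac:(lia).
apply: (@LCF_ge _ _ _ _ (s - a) (t - a)); try lia.
rewrite split_ham; lia.
Qed.
Lemma arith (a b x y H d : nat) : a.*2 + b.*2 <= H.*2 + x + y -> H <= d -> x <= a -> y <= b ->
 [/\ a.*2 - x <= d.*2, a.*2 <= (a.*2 - x) + x, b.*2 <= (d.*2 - (a.*2 - x)) + y &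
     d.*2 - (a.*2 - x) <= d.*2 ].
Proof. rewrite -!muln2; try split; lia. Qed.

Lemma arith2 (h1 h2 d1 d2 k : nat) : h1 <= d1.*2 -> h2 <= d2.*2 -> d1 + d2 = k ->
  h1 + h2 + ((d1.*2 - h1) + (d2.*2 - h2)) = k.*2.
Proof. rewrite -!muln2; try split; lia. Qed.
End L.

Theorem corollary11 (T : eqType) (X Y : seq T) (k l : nat)
    (S : nat -> Prop) (h : nat -> nat -> nat)
    (N : seq T -> seq (option T) -> Prop) :
  1 <= l ->
  is_cover l S h ->
  k_complete k
    (fun F => exists p, (Pairs S X p \/ Pairs S Y p) /\ (F = p.1 \/ F = p.2)) N ->
  l <= LCF k X Y ->
  is_max (fun m => exists k1 k2, k1 + k2 = k.*2 /\
            pairLCPvals (PairsKK S N k k1 X) (PairsKK S N k k2 Y) m)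
         (LCF k X Y).
Proof.
move=> l1 [Spos Scov] Hc lL.
split; last by move=> n [k1 [k2 [hk hv]]]; exact: upper hv.
have [len [i0 [j0 [eL hX hY hk]]]] := LCF_wit k X Y.
have [hl [Si Sj]] := Scov i0.+1 j0.+1 isT isT.
set h' := h i0.+1 j0.+1 in hl Si Sj.
have hlen : h' < len by lia.
set s := i0 + h'; set t := j0 + h'.
have PX : Pairs S X (rev (take s X), drop s X).
  exists (i0.+1 + h'); split => //; apply/andP; split; lia.
have PY : Pairs S Y (rev (take t Y), drop t Y).
  exists (j0.+1 + h'); split => //; apply/andP; split; lia.
have e := @split_ham _ X Y h' s t (len - h') ltac:(lia) ltac:(lia) ltac:(lia) ltac:(lia).
have e1 : s - h' = i0 by lia.
have e2 : t - h' = j0 by lia.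
have e3 : h' + (len - h') = len by lia.
rewrite e1 e2 e3 in e.
set U1 := rev (take s X) in PX e; set U2 := drop s X in PX e.
set V1 := rev (take t Y) in PY e; set V2 := drop t Y in PY e.
have sU1 : size U1 = s by rewrite /U1 size_rev size_takel //; lia.
have sV1 : size V1 = t by rewrite /V1 size_rev size_takel //; lia.
have sU2 : size U2 = size X - s by rewrite /U2 size_drop.
have sV2 : size V2 = size Y - t by rewrite /V2 size_drop.
set d1 := hamming (take h' U1) (take h' V1) in e.
set d2 := k - d1.
have FU1 : exists p, (Pairs S X p \/ Pairs S Y p) /\ (U1 = p.1 \/ U1 = p.2)
  by exists (U1, U2); split; [left|left].
have FU2 : exists p, (Pairs S X p \/ Pairs S Y p) /\ (U2 = p.1 \/ U2 = p.2)
  by exists (U1, U2); split; [left|right].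
have FV1 : exists p, (Pairs S X p \/ Pairs S Y p) /\ (V1 = p.1 \/ V1 = p.2)
  by exists (V1, V2); split; [right|left].
have FV2 : exists p, (Pairs S X p \/ Pairs S Y p) /\ (V2 = p.1 \/ V2 = p.2)
  by exists (V1, V2); split; [right|right].
have [U1' [V1' [[sU1' [sV1' dp1]] [NU1 NV1]]]] := Hc _ _ FU1 FV1 d1 ltac:(lia).
have [U2' [V2' [[sU2' [sV2' dp2]] [NU2 NV2]]]] := Hc _ _ FU2 FV2 d2 ltac:(lia).
have m1le := lcpd_le d1 U1 V1.
have m2le := lcpd_le d2 U2 V2.
have [tk1 c1 c1a c1b] := @dpair_gen _ (lcpd d1 U1 V1) U1 V1 U1' V1' sU1' sV1' (leq_trans m1le (geq_minl _ _)) (leq_trans m1le (geq_minr _ _)) dp1.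
have [tk2 c2 c2a c2b] := @dpair_gen _ (lcpd d2 U2 V2) U2 V2 U2' V2' sU2' sV2' (leq_trans m2le (geq_minl _ _)) (leq_trans m2le (geq_minr _ _)) dp2.
have hm1 := lcpd_ham d1 U1 V1.
have hm2 := lcpd_ham d2 U2 V2.
have g1 : h' <= lcpd d1 U1 V1.
  apply: lcpd_ge; [lia|done].
have g2 : len - h' <= lcpd d2 U2 V2.
  apply: lcpd_ge; [lia|lia].
have l1' : lcpd d1 U1 V1 <= lcp U1' V1'.
  apply: lcp_ge => //; rewrite sU1' sV1'; lia.
have l2' : lcpd d2 U2 V2 <= lcp U2' V2'.
  apply: lcp_ge => //; rewrite sU2' sV2'; lia.
have n1 := nd_le_ham sU1'; have n2 := nd_le_ham sU2'.
have n3 := nd_le_ham sV1'; have n4 := nd_le_ham sV2'.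
have [A1 A2 A3 A4] := arith c1 hm1 n1 n3.
have [B1 B2 B3 B4] := arith c2 hm2 n2 n4.
have hd1 : d1 + d2 = k by rewrite /d2; lia.
have hk2 := arith2 A1 B1 hd1.
have hu1 := leq_trans c1a hm1; have hv1 := leq_trans c1b hm1.
have hu2 := leq_trans c2a hm2; have hv2 := leq_trans c2b hm2.
set hU1 := (hamming (map Some U1) U1').*2 - ndollar U1' in A1 A2 A3 A4 hk2.
set hU2 := (hamming (map Some U2) U2').*2 - ndollar U2' in B1 B2 B3 B4 hk2.
set hV1 := d1.*2 - hU1 in A3 A4 hk2; set hV2 := d2.*2 - hU2 in B3 B4 hk2.
have vals : pairLCPvals (PairsKK S N k (hU1 + hU2) X) (PairsKK S N k (hV1 + hV2) Y)
    (lcp U1' V1' + lcp U2' V2').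
  exists (U1', U2'), (V1', V2'); split => //.
    by exists U1, U2, d1, d2, hU1, hU2.
  by exists V1, V2, d1, d2, hV1, hV2.
have up := upper hk2 vals.
have -> : LCF k X Y = lcp U1' V1' + lcp U2' V2'.
  apply/eqP; rewrite eqn_leq up andbT.
  rewrite eL; apply: (leq_trans _ (leq_add (leq_trans g1 l1') (leq_trans g2 l2'))).
  by rewrite subnKC // ltnW.
by exists (hU1 + hU2), (hV1 + hV2).
Qed.
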